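(* Let $p$ be an odd prime, let $G$ be a quasi-powerful $p$-group and let $H=G^{p}Z(G)$. Then $H$ is strongly powerful, i.e. $[H,H]\le H^{p^{2}}$.
   Context: For an odd prime $p$, a finite $p$-group $G$ is powerful if $[G,G]\le G^{p}$, where $G^{p^k}=\langle g^{p^k}\mid g\in G\rangle$, and $G$ is quasi-powerful if $G/Z(G)$ is powerful. A finite $p$-group $X$ is strongly powerful if $[X,X]\le X^{p^{2}}$. *)

(* Defs.v *)
From mathcomp Require Import all_boot all_fingroup all_solvable.
Set Implicit Arguments. Unset Strict Implicit. Unset Printing Implicit Defensive.
Local Open Scope group_scope.

Definition powsub (gT : finGroupType) (G : {set gT}) (n : nat) : {set gT} :=
  <<[set x ^+ n | x in G]>>.

Definition powerful (gT : finGroupType) (p : nat) (G : {set gT}) : Prop :=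
  [~: G, G] \subset powsub G p.

Definition quasi_powerful (gT : finGroupType) (p : nat) (G : {group gT}) : Prop :=
  powerful p (G / 'Z(G)).

Definition strongly_powerful (gT : finGroupType) (p : nat) (X : {set gT}) : Prop :=
  [~: X, X] \subset powsub X (p ^ 2).

(* Main.v *)
Require Import Defs.
From mathcomp Require Import all_boot all_fingroup all_solvable.
Local Open Scope group_scope.

Canonical powsub_group (gT : finGroupType) (G : {set gT}) n :=
  Eval hnf in [group of powsub G n].

Section Helpers.
Context {gT : finGroupType}.
Implicit Types X Y : {set gT}.

Lemma mem_powsub X n x : x \in X -> x ^+ n \in powsub X n.
Proof. by move=> Xx; apply: mem_gen; apply: imset_f. Qed.

Lemma powsubS X Y n : X \subset Y -> powsub X n \subset powsub Y n.
Proof. by move=> sXY; apply: genS; apply: imsetS. Qed.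

Lemma powsub_sub (G : {group gT}) n : powsub G n \subset G.
Proof.
rewrite gen_subG; apply/subsetP => _ /imsetP[x Gx ->]; exact: groupX.
Qed.

Lemma powsub_trivP X n : powsub X n = 1 -> forall x, x \in X -> x ^+ n = 1.
Proof. by move=> E x Xx; have := @mem_powsub X n x Xx; rewrite E => /set1P. Qed.

Lemma powsub_norm (G : {set gT}) X n : G \subset 'N(X) -> G \subset 'N(powsub X n).
Proof.
move=> nXG; apply: subset_trans (norm_gen _).
apply/subsetP => g Gg; rewrite inE; apply/subsetP => _ /imsetP[_ /imsetP[x Xx ->] ->].
rewrite conjXg; apply: imset_f; by rewrite memJ_norm ?(subsetP nXG).
Qed.

Lemma morphim_powsub (rT : finGroupType) (D : {group gT}) (f : {morphism D >-> rT}) X n :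
  X \subset D -> f @* powsub X n = powsub (f @* X) n.
Proof.
move=> sXD; rewrite /powsub morphim_gen; last first.
  apply/subsetP => _ /imsetP[x Xx ->]; exact: groupX (subsetP sXD x Xx).
congr <<_>>; rewrite morphimEsub; last first.
  apply/subsetP => _ /imsetP[x Xx ->]; exact: groupX (subsetP sXD x Xx).
rewrite (morphimEsub f sXD) -!imset_comp; apply: eq_in_imset => x Xx /=.
by rewrite morphX // (subsetP sXD x Xx).
Qed.

End Helpers.
Arguments powsub_trivP {gT X n}.
Arguments mem_powsub {gT X} n {x}.


Section Core.
Context {gT : finGroupType}.

Lemma commMcentral (a z w : gT) : commute z w -> commute z [~ a, w] -> [~ a * z, w] = [~ a, w].
Proof.
move=> czw cz; rewrite commMgJ.
have -> : [~ z, w] = 1 by apply/eqP/commgP.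
by rewrite mulg1 /conjg -cz mulKg.
Qed.

Lemma p_dvd_bin2 p : prime p -> odd p -> p %| 'C(p, 2).
Proof.
move=> pp op; apply: prime_dvd_bin => //.
have p_gt1 := prime_gt1 pp; rewrite /=; case: p p_gt1 op {pp} => [|[|[|q]]] //.
Qed.

Lemma core1 (G : {group gT}) p : prime p -> odd p ->
  [~: G, G] \subset powsub G p * 'Z(G) ->
  [~: [~: powsub G p, G], G] = 1 ->
  powsub [~: powsub G p, G] p = 1 ->
  powsub [~: G, G] p = 1 ->
  [~: powsub G p, G] = 1.
Proof.
move=> pp op hder h2 h3 h4.
have cAG : [~: powsub G p, G] \subset 'C(G) by apply/commG1P.
apply/commG1P; rewrite gen_subG; apply/subsetP => _ /imsetP[x Gx ->].
apply/centP => y Gy.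
have cG : [~ x, y] \in [~: G, G] by apply: mem_commg.
case/mulsgP: (subsetP hder _ cG) => a z Aa Zz def_c.
have Ga : a \in G := subsetP (powsub_sub G p) a Aa.
have cz : forall u, u \in G -> commute z u.
  by move=> u Gu; case/setIP: Zz => _ /centP; apply.
set c := [~ x, y] in def_c cG *.
set t := [~ a, x].
have At : t \in [~: powsub G p, G] by apply: mem_commg.
have ct : forall g, g \in G -> commute t g.
  by move=> g Gg; apply: (centP (subsetP cAG t At)).
have tp : t ^+ p = 1 by apply: powsub_trivP h3 t At.
have cp : c ^+ p = 1 by apply: powsub_trivP h4 c cG.
have Gc : c \in G by apply: subsetP (der_sub 1 G) c cG.
have Gt : t \in G by apply: subsetP (der_sub 1 G) t (subsetP (commgSS (powsub_sub G p) (subxx G)) t At).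
have key : forall n, [~ x ^+ n, y] = c ^+ n * t ^+ 'C(n, 2).
  elim=> [|n IH]; first by rewrite !expg0 comm1g mulg1.
  have tn : [~ c, x ^+ n] = t ^+ n.
    rewrite def_c commMcentral; last 2 first.
    - by apply: cz; rewrite groupX.
    - by apply: cz; rewrite groupR ?groupX.
    by rewrite commgX //; exact: (esym (ct x Gx)).
  rewrite expgS commMgJ IH conjg_mulR tn.
  rewrite binS bin1 expgD.
  have ctn : forall m k, commute (t ^+ m) (c ^+ k) by move=> m k; apply: commuteX2; apply: ct.
  by rewrite -/c -mulgA (mulgA (t ^+ n)) ctn expgS -!mulgA -!expgD addnC.
apply/commgP; rewrite key cp mul1g.
by case/dvdnP: (p_dvd_bin2 _ pp op) => k ->; rewrite mulnC expgM tp expg1n.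
Qed.
End Core.


Section Core2.
Context {gT : finGroupType}.

Lemma core2 (G : {group gT}) p :
  [~: G, G] \subset powsub G p * 'Z(G) ->
  [~: [~: powsub G p, powsub G p], G] = 1 ->
  powsub [~: powsub G p, powsub G p] p = 1 ->
  powsub [~: G, G] (p ^ 2) = 1 ->
  [~: powsub G p, G] \subset powsub [~: G, G] p ->
  [~: powsub G p, powsub G p] = 1.
Proof.
move=> hder h2 h3 h4 h5.
have sAG := powsub_sub G p.
have cTG : [~: powsub G p, powsub G p] \subset 'C(G) by apply/commG1P.
have F1 : forall a b, a \in powsub G p -> b \in powsub G p -> commute (a ^+ p) b.
  move=> a b Aa Ab; apply/commgP; rewrite commXg.
    by rewrite (powsub_trivP h3) // mem_commg.
  exact: esym (centP (subsetP cTG _ (mem_commg Aa Ab)) a (subsetP sAG a Aa)).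
have cZ : forall z u, z \in 'Z(G) -> u \in G -> commute z u.
  by move=> z u Zz Gu; case/setIP: Zz => _ /centP; apply.
have decomp : forall g, g \in [~: G, G] ->
    exists a, exists z, [/\ a \in powsub G p, z \in 'Z(G) & g = a * z].
  move=> g Gg; case/mulsgP: (subsetP hder g Gg) => a z Aa Zz ->.
  by exists a, z.
have powdec : forall a z, a \in powsub G p -> z \in 'Z(G) ->
    (a * z) ^+ p = a ^+ p * z ^+ p.
  move=> a z Aa Zz; apply: expgMn; apply: esym; apply: cZ => //.
  exact: subsetP sAG a Aa.
have E1a : powsub [~: G, G] p \subset 'C(powsub G p).
  rewrite gen_subG; apply/subsetP => _ /imsetP[g Gg ->].
  have [a [z [Aa Zz ->]]] := decomp g Gg.
  rewrite powdec // groupM //.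
    by apply/centP => b Ab; apply: F1.
  rewrite groupX //; apply/centP => b Ab; apply: cZ => //.
  exact: subsetP sAG b Ab.
have E1b : forall w, w \in powsub [~: G, G] p -> w ^+ p = 1.
  have abW : abelian (powsub [~: G, G] p).
    rewrite /powsub abelian_gen; apply/subsetP => _ /imsetP[g Gg ->].
    apply/centP => _ /imsetP[h Gh ->].
    have [b [w [Ab Zw ->]]] := decomp h Gh.
    rewrite powdec //; apply: commuteM.
      apply: (centP (subsetP E1a _ (mem_powsub p Gg))).
      by rewrite groupX.
    apply: esym; apply: cZ; first by rewrite groupX.
    by rewrite groupX // (subsetP (der_sub 1 G)).
  have gS : group_set [set w in powsub [~: G, G] p | w ^+ p == 1].
    apply/group_setP; split; first by rewrite inE group1 expg1n eqxx.
    move=> u v; rewrite !inE => /andP[Wu /eqP up] /andP[Wv /eqP vp].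
    rewrite groupM //= expgMn ?up ?vp ?mulg1 //.
    exact: (centsP abW).
  have : powsub [~: G, G] p \subset Group gS.
    rewrite gen_subG; apply/subsetP => _ /imsetP[g Gg ->].
    rewrite inE mem_powsub //= -expgM -(expn1 p) -expnS expn1.
    by rewrite (powsub_trivP h4).
  by move=> sWS w Ww; have := subsetP sWS w Ww; rewrite inE => /andP[_ /eqP].
have E2 : powsub [~: G, G] p \subset 'C(G).
  rewrite gen_subG; apply/subsetP => _ /imsetP[g Gg ->].
  apply/centP => y Gy.
  have [a [z [Aa Zz def_g]]] := decomp g Gg.
  have Ga := subsetP sAG a Aa.
  have Rc : [~ g, y] \in [~: powsub G p, G].
    rewrite def_g commMcentral; first by rewrite mem_commg.
      exact: cZ.
    by apply: cZ; rewrite // groupR.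
  have Wc := subsetP h5 _ Rc.
  apply/commgP; rewrite commXg; first by rewrite E1b.
  have cca : commute [~ g, y] a by apply: (centP (subsetP E1a _ Wc)).
  have ccz : commute [~ g, y] z.
    have GgG : g \in G := subsetP (der_sub 1 G) g Gg.
    by apply: esym; apply: cZ; rewrite // groupR.
  have := commuteM cca ccz; rewrite -def_g => /esym; done.
apply/commG1P; rewrite gen_subG; apply/subsetP => _ /imsetP[x Gx ->].
apply/centP => v Av.
have Re : [~ x, v] \in [~: powsub G p, G] by rewrite commGC mem_commg.
have We := subsetP h5 _ Re.
apply/commgP; rewrite commXg; first by rewrite E1b.
exact: esym (centP (subsetP E2 _ We) x Gx).
Qed.
End Core2.


Section LemmaX.
Context {gT : finGroupType}.

Lemma quotient_powsub (H : {group gT}) (X : {set gT}) n :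
  X \subset 'N(H) -> powsub X n / H = powsub (X / H) n.
Proof. by move=> nHX; apply: morphim_powsub. Qed.

Lemma lemmaX (G N M : {group gT}) p : prime p -> p.-group G -> N <| G -> M <| G ->
  N \subset <<([~: N, G] :|: powsub N p) :|: M>> -> N \subset M.
Proof.
move=> pp pG /andP[sNG nNG] /andP[sMG nMG] hN.
have nMN : N \subset 'N(M) := subset_trans sNG nMG.
rewrite -quotient_sub1 //.
have hNb : N / M \subset <<([~: N / M, G / M] :|: powsub (N / M) p) :|: M / M>>.
  have := quotientS M hN; rewrite quotient_gen; last first.
    rewrite !subUset normG andbT; apply/andP; split.
      by apply: subset_trans nMN; rewrite commg_subl.
    exact: subset_trans (powsub_sub N p) nMN.
  by rewrite !quotientU quotientR // quotient_powsub.
rewrite trivg_quotient in hNb.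
have pNb : p.-group (N / M) := quotient_pgroup M (pgroupS sNG pG).
have pGb : p.-group (G / M) := quotient_pgroup M pG.
have sNbGb : N / M \subset G / M := quotientS M sNG.
have nNbGb : G / M \subset 'N(N / M) := quotient_norms M nNG.
have sMho : powsub (N / M) p \subset 'Phi(N / M).
  by rewrite /powsub -(expn1 p) -(MhoE 1 pNb) (Phi_joing pNb) joing_subr.
have defN : 'Phi(N / M) <*> [~: N / M, G / M] = N / M.
  apply/eqP; rewrite eqEsubset join_subG Phi_sub commg_subl nNbGb /=.
  apply: subset_trans hNb _; rewrite gen_subG !subUset sub1G andbT.
  by rewrite joing_subr (subset_trans sMho) // joing_subl.
have := Phi_nongen defN; rewrite genGid => defR.
case: (eqsVneq (N / M) 1) => [-> // | ntN].
have hA : G / M \subset 'N_(G / M)(N / M) by rewrite subsetI subxx nNbGb.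
by have := nil_comm_properl (pgroup_nil pGb) sNbGb ntN hA; rewrite defR (negbTE (proper_irrefl _)).
Qed.
End LemmaX.


Lemma quot_triv (gT : finGroupType) (H X : {group gT}) :
  X \subset 'N(H) -> X \subset H -> X / H = 1.
Proof. by move=> nX sX; apply/trivgP; rewrite quotient_sub1. Qed.

Theorem proposition8p3 (gT : finGroupType) (p : nat) (G : {group gT}) :
  prime p -> odd p -> p.-group G -> quasi_powerful p G ->
  strongly_powerful p (powsub G p * 'Z(G)).
Proof.
move=> pp op pG qp.
have sAG := powsub_sub G p.
have nZG : G \subset 'N('Z(G)) by case/andP: (center_normal G).
have nAG : G \subset 'N(powsub G p) by apply: powsub_norm; apply: normG.
have sDG : [~: G, G] \subset G := der_sub 1 G.
have nDG : G \subset 'N([~: G, G]) := der_norm 1 G.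
have hder : [~: G, G] \subset powsub G p * 'Z(G).
  move: qp; rewrite /quasi_powerful /powerful -quotientR // -quotient_powsub //.
  rewrite sub_quotient_pre ?(subset_trans sDG nZG) //.
  rewrite quotientK ?(subset_trans sAG nZG) //.
  by rewrite (normC (subset_trans sAG nZG)).
have Q1 : forall R : {group gT}, G \subset 'N(R) ->
    [~: G / R, G / R] \subset powsub (G / R) p * 'Z(G / R).
  move=> R nRG; rewrite -quotientR // -quotient_powsub //.
  apply: subset_trans (quotientS _ hder) _.
  rewrite quotientMl ?(subset_trans sAG) //; apply: mulgSS => //.
  exact: morphim_center.
have P1 : [~: powsub G p, G] \subset powsub [~: G, G] p.
  have nN : [~: powsub G p, G] <| G.
    by rewrite /normal commg_normr (subset_trans (commgSS sAG (subxx G))).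
  have nM : powsub [~: G, G] p <| G.
    by rewrite /normal powsub_norm // (subset_trans (powsub_sub _ _)).
  apply: (@lemmaX _ G _ _ p pp pG nN nM).
  set R := <<_>>.
  have nRG : G \subset 'N(R).
    apply: subset_trans (norm_gen _); rewrite !normsU ?commg_normr //.
      by apply: powsub_norm; apply: commg_normr.
    exact: powsub_norm.
  have sNG : [~: powsub G p, G] \subset G by case/andP: nN.
  have nR : forall X, X \subset G -> X \subset 'N(R) := fun X sX => subset_trans sX nRG.
  rewrite -quotient_sub1 ?(subset_trans sNG) //.
  rewrite quotientR ?(subset_trans sAG) // quotient_powsub //.
  rewrite core1 //.
  - exact: Q1.
  - rewrite -quotient_powsub // -!quotientR ?(subset_trans sAG) //.
      apply: quot_triv; first by apply: nR; apply: subset_trans sDG; exact: commgSS sNG (subxx G).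
      by apply: sub_gen; rewrite -setUA subsetUl.
    exact: nR.
  - rewrite -quotient_powsub // -quotientR ?(subset_trans sAG) // -quotient_powsub.
      apply: quot_triv; first by apply: nR; apply: subset_trans (powsub_sub _ _) _.
      by apply: sub_gen; apply: subset_trans (subsetUl _ _); apply: subsetUr.
    exact: nR.
  - rewrite -quotientR // -quotient_powsub ?(subset_trans sDG) //.
    apply: quot_triv; first by apply: nR; apply: subset_trans (powsub_sub _ _) _.
    by apply: sub_gen; rewrite subsetUr.
have P2 : [~: powsub G p, powsub G p] \subset powsub [~: G, G] (p ^ 2).
  have nN : [~: powsub G p, powsub G p] <| G.
    rewrite /normal normsR // (subset_trans (commgSS sAG sAG)) //.
  have nM : powsub [~: G, G] (p ^ 2) <| G.
    by rewrite /normal powsub_norm // (subset_trans (powsub_sub _ _)).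
  apply: (@lemmaX _ G _ _ p pp pG nN nM).
  set R := <<_>>.
  have nRG : G \subset 'N(R).
    apply: subset_trans (norm_gen _); rewrite !normsU ?commg_normr //.
      by apply: powsub_norm; case/andP: nN.
    exact: powsub_norm.
  have sNG : [~: powsub G p, powsub G p] \subset G by case/andP: nN.
  have nR : forall X, X \subset G -> X \subset 'N(R) := fun X sX => subset_trans sX nRG.
  rewrite -quotient_sub1 ?nR //.
  rewrite quotientR ?nR // quotient_powsub ?nR //.
  rewrite core2 //.
  - exact: Q1.
  - rewrite -!quotient_powsub ?nR // -!quotientR ?nR //.
      apply: quot_triv; first by apply: nR; apply: subset_trans sDG; exact: commgSS sNG (subxx G).
      by apply: sub_gen; rewrite -setUA subsetUl.
  - rewrite -!quotient_powsub ?nR // -quotientR ?nR // -quotient_powsub ?nR //.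
    apply: quot_triv; first by apply: nR; apply: subset_trans (powsub_sub _ _) _.
    by apply: sub_gen; apply: subset_trans (subsetUl _ _); apply: subsetUr.
  - rewrite -quotientR // -quotient_powsub ?nR //.
    apply: quot_triv; first by apply: nR; apply: subset_trans (powsub_sub _ _) _.
    by apply: sub_gen; rewrite subsetUr.
  - rewrite -quotient_powsub ?nR // -!quotientR ?nR // -quotient_powsub ?nR //.
    exact: quotientS.
rewrite /strongly_powerful.
apply: (subset_trans _ (subset_trans P2 (powsubS _ _ (p ^ 2) hder))).
rewrite gen_subG; apply/subsetP => _ /imset2P[h k Hh Hk ->].
case/mulsgP: Hh => a z Aa Zz ->; case/mulsgP: Hk => b w Ab Zw ->.
have cZ : forall z u, z \in 'Z(G) -> u \in G -> commute z u.
  by move=> z0 u Zz0 Gu; case/setIP: Zz0 => _ /centP; apply.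
have Ga := subsetP sAG a Aa; have Gb := subsetP sAG b Ab.
have GZ : 'Z(G) \subset G := center_sub G.
rewrite commMcentral; last 2 first.
- by apply: cZ; rewrite // groupM // (subsetP GZ).
- by apply: cZ; rewrite // groupR // groupM // (subsetP GZ).
rewrite -invg_comm commMcentral; last 2 first.
- by apply: cZ.
- by apply: cZ; rewrite // groupR.
by rewrite invg_comm mem_commg.
Qed.
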